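(* Let $m \geq 4$ and let $\Delta_m$ be the two-edge-coloured graph defined in the context. Then: (1) There exists a transversal graph $T$ of $\Delta_m$ such that no transversal graph of $\Delta_m$ is isomorphic, as an edge-coloured graph, to the edge-colour complement of $T$. (2) There is no permutation $\pi$ of the set of $4^m$ positive signed basis matrices that sends every amicable pair of basis matrices with disjoint support to an anti-amicable pair with disjoint support and every anti-amicable pair with disjoint support to an amicable pair with disjoint support; and the set of transversal graphs of $\Delta_m$ that are not isomorphic (as edge-coloured graphs) to their own edge-colour complement cannot be partitioned into pairs in which each member is isomorphic to the edge-colour complement of the other. (3) Among all $m' \geq 1$, the values for which there exists an automorphism of $\Delta_{m'}$ that swaps the red subgraph $\Delta_{m'}[-1]$ and the blue subgraph $\Delta_{m'}[1]$ are exactly $m' = 1, 2, 3$.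
   Context: Let $E_1 = \begin{pmatrix} 0 & -1 \\ 1 & 0\end{pmatrix}$ and $E_2 = \begin{pmatrix} 0 & 1 \\ 1 & 0 \end{pmatrix}$. The positive signed basis of the real monomial representation of the Clifford algebra $\mathbb{R}_{m,m}$ is the set of $4^m$ real monomial $2^m\times 2^m$ matrices $M_1\otimes M_2\otimes\cdots\otimes M_m$ with each $M_t \in \{I_2, E_1, E_2, E_1E_2\}$ (one fixed sign per such product). Two matrices have disjoint support if there is no position where both have a nonzero entry. Two orthogonal matrices $A,B$ are amicable if $AB^{-1}$ is symmetric and anti-amicable if $AB^{-1}$ is skew-symmetric. $\Delta_m$ is the graph whose vertices are the $4^m$ positive signed basis matrices, in which distinct $A,B$ are joined by a red edge (label $-1$) if they have disjoint support and are anti-amicable, by a blue edge (label $1$) if they have disjoint support and are amicable, and are not adjacent otherwise. $\Delta_m[-1]$ (resp. $\Delta_m[1]$) is the graph on the same vertex set with only the red (resp. blue) edges. A transversal graph of $\Delta_m$ is an induced subgraph of $\Delta_m$ that is a complete graph on $2^m$ vertices (with its edge colours). The edge-colour complement of an edge-coloured complete graph is obtained by swapping the colours red and blue on every edge. An automorphism of $\Delta_m$ swapping $\Delta_m[-1]$ and $\Delta_m[1]$ is a permutation of the vertices mapping red edges exactly onto blue edges and blue edges exactly onto red edges. *)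

(* Defs.v *)
From HB Require Import structures.
From mathcomp Require Import all_boot all_order all_algebra all_fingroup.
Set Implicit Arguments. Unset Strict Implicit. Unset Printing Implicit Defensive.
Import Order.TTheory GRing.Theory Num.Theory.
Local Open Scope ring_scope.

Definition E1 : 'M[int]_2 :=
  \matrix_(i < 2, j < 2) (if (val i == 0%N) && (val j == 1%N) then -1
                          else if (val i == 1%N) && (val j == 0%N) then 1 else 0).
Definition E2 : 'M[int]_2 :=
  \matrix_(i < 2, j < 2) (if val i != val j then 1 else 0).

Definition gen (k : 'I_4) : 'M[int]_2 :=
  match val k with
  | 0%N => 1%:M
  | 1%N => E1
  | 2%N => E2
  | _ => E1 *m E2
  end.

(* Index type of the positive signed basis of R_{m,m}: choices (M_1,...,M_m). *)
Definition Idx (m : nat) := {ffun 'I_m -> 'I_4}.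

(* t-th binary digit (t = 0 most significant) of a row/column index of a
   2^m x 2^m matrix, according to the Kronecker product ordering. *)
Definition kbit (m : nat) (t : 'I_m) (i : 'I_(2 ^ m)) : 'I_2 :=
  inord ((val i %/ 2 ^ (m - t.+1)) %% 2).

(* The basis matrix M_1 (x) M_2 (x) ... (x) M_m (Kronecker product, entrywise). *)
Definition basis (m : nat) (v : Idx m) : 'M[int]_(2 ^ m) :=
  \matrix_(i, j) \prod_(t < m) gen (v t) (kbit t i) (kbit t j).

Definition disjoint_support n (A B : 'M[int]_n) : bool :=
  [forall i, forall j, (A i j == 0) || (B i j == 0)].

Definition amicable n (A B : 'M[int]_n) : bool :=
  (A *m invmx B)^T == A *m invmx B.
Definition anti_amicable n (A B : 'M[int]_n) : bool :=
  (A *m invmx B)^T == - (A *m invmx B).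

Definition red (m : nat) (a b : Idx m) : bool :=
  [&& a != b, disjoint_support (basis a) (basis b) & anti_amicable (basis a) (basis b)].
Definition blue (m : nat) (a b : Idx m) : bool :=
  [&& a != b, disjoint_support (basis a) (basis b) & amicable (basis a) (basis b)].

Definition transversal_graph (m : nat) (S : {set Idx m}) : Prop :=
  #|S| = (2 ^ m)%N /\
  {in S &, forall a b, a != b -> red a b || blue a b}.

Definition col_iso (m : nat) (S S' : {set Idx m}) : Prop :=
  exists f : Idx m -> Idx m,
    [/\ {in S &, injective f}, f @: S = S' &
        {in S &, forall a b, red (f a) (f b) = red a b /\ blue (f a) (f b) = blue a b}].

Definition compl_iso (m : nat) (S S' : {set Idx m}) : Prop :=
  exists f : Idx m -> Idx m,
    [/\ {in S &, injective f}, f @: S = S' &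
        {in S &, forall a b, red (f a) (f b) = blue a b /\ blue (f a) (f b) = red a b}].

Definition swapping_perm (m : nat) (p : {perm Idx m}) : Prop :=
  forall a b, red (p a) (p b) = blue a b /\ blue (p a) (p b) = red a b.

Definition amicable_swapping (m : nat) (p : {perm Idx m}) : Prop :=
  forall a b, (blue a b -> red (p a) (p b)) /\ (red a b -> blue (p a) (p b)).

(* Main.v *)
Require Import Defs.
From HB Require Import structures.
From mathcomp Require Import all_boot all_order all_algebra all_fingroup.
From mathcomp Require Import zify.
Set Implicit Arguments. Unset Strict Implicit. Unset Printing Implicit Defensive.
Import Order.TTheory GRing.Theory Num.Theory.

Section SecA.
Local Open Scope ring_scope.

Definition xb (k : 'I_4) : bool := (val k == 1%N) || (val k == 2%N).
Definition zb (k : 'I_4) : bool := (val k == 1%N) || (val k == 3%N).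
Definition rb (r : 'I_2) : bool := val r == 1%N.
Definition sg (b : bool) : int := if b then -1 else 1.

Lemma sgD a b : sg (a (+) b) = sg a * sg b.
Proof. by case: a; case: b; rewrite /sg ?mulN1r ?mulr1 ?opprK. Qed.
Lemma sg_neq0 b : sg b != 0. Proof. by case: b. Qed.
Lemma sg_inj : injective sg. Proof. by case; case. Qed.
Lemma sgN b : sg (~~ b) = - sg b. Proof. by case: b; rewrite /sg ?opprK. Qed.

Lemma genE k r s : gen k r s = if rb s == rb r (+) xb k then sg (zb k && ~~ rb r) else 0.
Proof.
case: k => [[|[|[|[|k]]]] Hk] //;
case: r => [[|[|r]] Hr] //; case: s => [[|[|s]] Hs] //;
rewrite /gen /= ?mxE /= ?big_ord_recl ?big_ord0 /= ?mxE //=.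
Qed.

End SecA.


Lemma digits_eq n a b : a < 2^n -> b < 2^n ->
  (forall e, e < n -> odd (a %/ 2^e) = odd (b %/ 2^e)) -> a = b.
Proof.
elim: n a b => [|n IH] a b ha hb H; first by rewrite expn0 in ha hb; lia.
have h0 : odd a = odd b by have := H 0%N isT; rewrite expn0 !divn1.
have hq : a %/ 2 = b %/ 2.
  apply: IH.
  - by rewrite ltn_divLR // -expnSr.
  - by rewrite ltn_divLR // -expnSr.
  move=> e he; rewrite -!divnMA -expnS; exact: H.
by rewrite (divn_eq a 2) (divn_eq b 2) !modn2 h0 hq.
Qed.

Definition bt m (t : 'I_m) (i : 'I_(2 ^ m)) : bool := rb (kbit t i).

Lemma bt_val m (t : 'I_m) i : bt t i = odd (i %/ 2 ^ (m - t.+1)).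
Proof.
rewrite /bt /rb /kbit; set n := (_ %% 2)%N.
have hn : (n < 2)%N by rewrite ltn_pmod.
rewrite -[val _]/(nat_of_ord _) inordK // /n modn2; by case: odd.
Qed.

Lemma bt_inj m (i j : 'I_(2 ^ m)) : (forall t, bt t i = bt t j) -> i = j.
Proof.
move=> H; apply: val_inj; apply: (digits_eq (ltn_ord i) (ltn_ord j)) => e he.
have ht : (m - e.+1 < m)%N by lia.
have := H (Ordinal ht); rewrite !bt_val /=.
by have -> : (m - (m - e.+1).+1 = e)%N by lia.
Qed.

Lemma bt_surj m (f : 'I_m -> bool) : exists i : 'I_(2 ^ m), forall t, bt t i = f t.
Proof.
pose phi (i : 'I_(2 ^ m)) : {ffun 'I_m -> bool} := [ffun t => bt t i].
have inj : injective phi.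
  by move=> i j /ffunP H; apply: bt_inj => t; have := H t; rewrite !ffunE.
have hc : (#|{ffun 'I_m -> bool}| <= #|'I_(2 ^ m)|)%N.
  by rewrite card_ffun card_bool !card_ord.
have := inj_card_onto inj hc [ffun t => f t].
case/codomP => i Hi; exists i => t.
by have := congr1 (fun g : {ffun 'I_m -> bool} => g t) Hi; rewrite !ffunE.
Qed.

Section SecC.
Local Open Scope ring_scope.

Definition sgnv m (v : Idx m) (i : 'I_(2 ^ m)) : bool :=
  \big[addb/false]_(t < m) (zb (v t) && ~~ bt t i).
Definition Rl m (v : Idx m) (i j : 'I_(2 ^ m)) : bool :=
  [forall t, bt t j == bt t i (+) xb (v t)].

Lemma prod_sg m (F : 'I_m -> bool) :
  \prod_(t < m) sg (F t) = sg (\big[addb/false]_(t < m) F t).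
Proof. by rewrite (big_morph sg sgD (erefl (sg false))). Qed.

Lemma basisE m (v : Idx m) i j :
  basis v i j = if Rl v i j then sg (sgnv v i) else 0.
Proof.
rewrite mxE; case: ifP => H.
  rewrite /sgnv -prod_sg; apply: eq_bigr => t _.
  by rewrite genE -/(bt t i) -/(bt t j) (forallP H t).
have [t Ht] : exists t, ~~ (bt t j == bt t i (+) xb (v t)).
  by apply/existsP; rewrite -negb_forall; move: H; rewrite /Rl => ->.
by rewrite (bigD1 t) //= genE -/(bt t i) -/(bt t j) (negbTE Ht) mul0r.
Qed.

Lemma prodE m (a b : Idx m) i j :
  (basis a *m (basis b)^T) i j =
  if [forall t, bt t i (+) xb (a t) == bt t j (+) xb (b t)]
  then sg (sgnv a i (+) sgnv b j) else 0.
Proof.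
rewrite mxE.
have [k0 Hk0] := bt_surj (fun t => bt t i (+) xb (a t)).
rewrite (bigD1 k0) //= big1 ?addr0; last first.
  move=> k Hk; rewrite basisE; case: ifP => // H; last by rewrite mul0r.
  case/eqP: Hk; apply: bt_inj => t; rewrite Hk0; exact: (eqP (forallP H t)).
rewrite [X in _ * X]mxE !basisE.
have -> : Rl a i k0 by apply/forallP => t; rewrite Hk0.
have -> : Rl b j k0 = [forall t, bt t i (+) xb (a t) == bt t j (+) xb (b t)].
  by apply: eq_forallb => t; rewrite Hk0.
by case: ifP; rewrite ?mulr0 // sgD.
Qed.

Lemma orthE m (b : Idx m) : basis b *m (basis b)^T = 1%:M.
Proof.
apply/matrixP => i j; rewrite prodE !mxE.
case: (eqVneq i j) => [<-|ne].
  by rewrite addbb; have -> : [forall t, bt t i (+) xb (b t) == bt t i (+) xb (b t)]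
    by apply/forallP.
case: ifP => // H; case/eqP: ne; apply: bt_inj => t.
by have := forallP H t; case: (bt t i); case: (bt t j); case: (xb (b t)).
Qed.

Lemma invE m (b : Idx m) : invmx (basis b) = (basis b)^T.
Proof.
have [U _] := mulmx1_unit (orthE b).
by rewrite -[RHS](mulKmx U) orthE mulmx1.
Qed.

End SecC.

Section SecD.
Local Open Scope ring_scope.

Definition XV m (v : Idx m) : {ffun 'I_m -> bool} := [ffun t => xb (v t)].
Definition q m (a b : Idx m) : bool :=
  \big[addb/false]_(t < m) ((zb (a t) (+) zb (b t)) && (xb (a t) (+) xb (b t))).

Lemma sgn_swap m (a b : Idx m) i j :
  [forall t, bt t i (+) xb (a t) == bt t j (+) xb (b t)] ->
  (sgnv a j (+) sgnv b i) (+) (sgnv a i (+) sgnv b j) = q a b.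
Proof.
move=> H; rewrite /sgnv -!big_split /q; apply: eq_bigr => t _ /=.
move: (forallP H t).
by case: (bt t i); case: (bt t j); case: (xb (a t)); case: (xb (b t));
   case: (zb (a t)); case: (zb (b t)).
Qed.

Lemma condC m (a b : Idx m) i j :
  [forall t, bt t j (+) xb (a t) == bt t i (+) xb (b t)] =
  [forall t, bt t i (+) xb (a t) == bt t j (+) xb (b t)].
Proof.
apply: eq_forallb => t.
by case: (bt t i); case: (bt t j); case: (xb (a t)); case: (xb (b t)).
Qed.

Lemma ord2m m : (0 < 2 ^ m)%N. Proof. by rewrite expn_gt0. Qed.

Lemma exists_pair m (a b : Idx m) : exists i j,
  [forall t, bt t i (+) xb (a t) == bt t j (+) xb (b t)].
Proof.
pose i0 : 'I_(2 ^ m) := Ordinal (ord2m m).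
have [j Hj] := bt_surj (fun t => bt t i0 (+) xb (a t) (+) xb (b t)).
exists i0, j; apply/forallP => t; rewrite Hj.
by case: (bt t i0); case: (xb (a t)); case: (xb (b t)).
Qed.

Lemma amicE m (a b : Idx m) : amicable (basis a) (basis b) = ~~ q a b.
Proof.
rewrite /amicable invE; apply/eqP/idP.
  move=> HC; have [i [j Hc]] := exists_pair a b.
  have E := congr1 (fun M : 'M_(2 ^ m) => M i j) HC.
  rewrite /= mxE !prodE condC Hc in E.
  by rewrite -(sgn_swap Hc) (sg_inj E) addbb.
move=> nq; apply/matrixP => i j; rewrite mxE !prodE condC.
case: ifP => // Hc; have := sgn_swap Hc; rewrite (negbTE nq).
by move: (sgnv a j (+) sgnv b i) (sgnv a i (+) sgnv b j) => x y; case: x; case: y.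
Qed.

Lemma antiE m (a b : Idx m) : anti_amicable (basis a) (basis b) = q a b.
Proof.
rewrite /anti_amicable invE; apply/eqP/idP.
  move=> HC; have [i [j Hc]] := exists_pair a b.
  have E := congr1 (fun M : 'M_(2 ^ m) => M i j) HC.
  rewrite /= mxE [X in _ = X]mxE !prodE condC Hc -sgN in E.
  by rewrite -(sgn_swap Hc) (sg_inj E); case: (sgnv a i (+) sgnv b j).
move=> nq; apply/matrixP => i j; rewrite mxE [X in _ = X]mxE !prodE condC.
case: ifP => [Hc|]; last by rewrite oppr0.
have := sgn_swap Hc; rewrite nq -sgN.
by move: (sgnv a j (+) sgnv b i) (sgnv a i (+) sgnv b j) => x y; case: x; case: y.
Qed.

Lemma disjE m (a b : Idx m) :
  disjoint_support (basis a) (basis b) = (XV a != XV b).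
Proof.
apply/idP/idP.
  move=> /forallP H; apply/eqP => E.
  pose i0 : 'I_(2 ^ m) := Ordinal (ord2m m).
  have [j Hj] := bt_surj (fun t => bt t i0 (+) xb (a t)).
  have := forallP (H i0) j; rewrite !basisE.
  have -> : Rl a i0 j by apply/forallP => t; rewrite Hj.
  have -> : Rl b i0 j.
    apply/forallP => t; rewrite Hj.
    have := congr1 (fun g : {ffun 'I_m -> bool} => g t) E; rewrite /XV !ffunE => ->.
    by [].
  by rewrite (negbTE (sg_neq0 _)) (negbTE (sg_neq0 _)).
move=> ne.
have [t Ht] : exists t, xb (a t) != xb (b t).
  apply/existsP; rewrite -negb_forall; apply: contra ne => /forallP H.
  by apply/eqP/ffunP => t; rewrite !ffunE; exact/eqP/(H t).
apply/forallP => i; apply/forallP => j; rewrite !basisE.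
case Ra: (Rl a i j); case Rb: (Rl b i j); rewrite ?eqxx ?orbT //.
have := forallP Ra t; have := forallP Rb t; move=> /eqP -> .
by move: Ht; case: (bt t i); case: (xb (a t)); case: (xb (b t)).
Qed.

Lemma redE m (a b : Idx m) : red a b = (XV a != XV b) && q a b.
Proof.
rewrite /red disjE antiE; case: (eqVneq a b) => [->|//]; by rewrite eqxx.
Qed.

Lemma blueE m (a b : Idx m) : blue a b = (XV a != XV b) && ~~ q a b.
Proof.
rewrite /blue disjE amicE; case: (eqVneq a b) => [->|//]; by rewrite eqxx.
Qed.

End SecD.


Definition Dp m (u v : Idx m) : bool :=
  \big[addb/false]_(t < m) (xb (u t) && zb (v t)).

Lemma qD m (a b : Idx m) : q a b = Dp a a (+) Dp a b (+) Dp b a (+) Dp b b.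
Proof.
rewrite /q /Dp -!big_split; apply: eq_bigr => t _ /=.
by case: (xb (a t)); case: (xb (b t)); case: (zb (a t)); case: (zb (b t)).
Qed.

Lemma D_lin m (u1 u2 w v : Idx m) : (forall t, xb (w t) = xb (u1 t) (+) xb (u2 t)) ->
  Dp w v = Dp u1 v (+) Dp u2 v.
Proof.
move=> H; rewrite /Dp -big_split; apply: eq_bigr => t _ /=; rewrite H.
by case: (xb (u1 t)); case: (xb (u2 t)); case: (zb (v t)).
Qed.

Lemma D_zero m (u v : Idx m) : (forall t, xb (u t) = false) -> Dp u v = false.
Proof. by move=> H; rewrite /Dp big1 // => t _; rewrite H. Qed.

Lemma s1 (P1 A1 P2 A2 C : bool) :
  false (+) false (+) P1 (+) A1 -> false (+) false (+) P2 (+) A2 ->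
  false (+) false (+) (P1 (+) P2) (+) C -> A1 (+) A2 (+) C.
Proof. by move: P1 A1 P2 A2 C; do 5!case. Qed.

Lemma s2 (A1 A2 C Y1 Y2 X1 X2 X12 Yy : bool) :
  A1 (+) A2 (+) C -> A1 (+) Y1 (+) X1 (+) Yy -> A2 (+) Y2 (+) X2 (+) Yy ->
  C (+) (Y1 (+) Y2) (+) X12 (+) Yy -> X1 (+) X2 (+) X12 (+) Yy = false.
Proof. by move: A1 A2 C Y1 Y2 X1 X2 X12 Yy; do 9!case. Qed.

Lemma s3 (X1 X2 X12 Yy Yp : bool) :
  X1 (+) X2 (+) X12 (+) Yy = false -> false (+) false (+) Yp (+) Yy ->
  X1 (+) X2 (+) X12 (+) Yp.
Proof. by move: X1 X2 X12 Yy Yp; do 5!case. Qed.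

Lemma per_y m (p0 a1 a2 a12 y : Idx m) :
  (forall t, xb (p0 t) = false) ->
  (forall t, xb (a12 t) = xb (a1 t) (+) xb (a2 t)) ->
  q p0 a1 -> q p0 a2 -> q p0 a12 -> q p0 y -> q a1 y -> q a2 y -> q a12 y ->
  Dp y a1 (+) Dp y a2 (+) Dp y a12 (+) Dp y p0.
Proof.
move=> H0 H12; rewrite !qD !(D_zero _ H0) !(D_lin _ H12).
move=> h1 h2 h3 h4 h5 h6 h7.
have := s1 h1 h2 h3 => h8.
exact: (s3 (s2 h8 h5 h6 h7) h4).
Qed.

Lemma final_contra m (p0 a1 a2 a12 b3 b4 b34 : Idx m) :
  (forall t, xb (b34 t) = xb (b3 t) (+) xb (b4 t)) ->
  Dp b3 a1 (+) Dp b3 a2 (+) Dp b3 a12 (+) Dp b3 p0 ->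
  Dp b4 a1 (+) Dp b4 a2 (+) Dp b4 a12 (+) Dp b4 p0 ->
  Dp b34 a1 (+) Dp b34 a2 (+) Dp b34 a12 (+) Dp b34 p0 -> False.
Proof.
move=> H; rewrite !(D_lin _ H).
move: (Dp b3 a1) (Dp b3 a2) (Dp b3 a12) (Dp b3 p0)
  (Dp b4 a1) (Dp b4 a2) (Dp b4 a12) (Dp b4 p0).
Time (by do 8!case).
Qed.


Lemma XV_xb m (v : Idx m) x t : XV v = x -> xb (v t) = x t.
Proof. by move=> <-; rewrite ffunE. Qed.

Lemma no_all_red m : (4 <= m)%N -> forall S : {set Idx m}, #|S| = (2 ^ m)%N ->
  {in S &, forall a b, a != b -> red a b} -> False.
Proof.
move=> hm S hS hR.
have injS : {in S &, injective (@XV m)}.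
  move=> a b ha hb E; apply/eqP; apply/negPn/negP => ne.
  by have := hR a b ha hb ne; rewrite redE E eqxx.
have onto : forall x, exists2 v, v \in S & XV v = x.
  move=> x.
  have E : (@XV m) @: S = setT.
    apply/eqP; rewrite eqEcard subsetT cardsT card_ffun card_bool card_ord.
    by rewrite (card_in_imset injS) hS leqnn.
  have : x \in (@XV m) @: S by rewrite E inE.
  by case/imsetP => v hv ->; exists v.
have qR : forall a b, a \in S -> b \in S -> XV a != XV b -> q a b.
  move=> a b ha hb ne; have ab : a != b by apply: contra ne => /eqP ->.
  by have := hR a b ha hb ab; rewrite redE ne.
have nd : forall (a b : Idx m) x y t, XV a = x -> XV b = y -> x t != y t -> XV a != XV b.
  by move=> a b x y t -> ->; apply: contra => /eqP ->.
have h0 : (0 < m)%N by lia.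
have h1 : (1 < m)%N by lia.
have h2 : (2 < m)%N by lia.
have h3 : (3 < m)%N by lia.
pose t0 := Ordinal h0; pose t1 := Ordinal h1; pose t2 := Ordinal h2; pose t3 := Ordinal h3.
pose e (k : 'I_m) : {ffun 'I_m -> bool} := [ffun t => t == k].
have [p0 hp0 Ep0] := onto [ffun => false].
have [a1 ha1 Ea1] := onto (e t0).
have [a2 ha2 Ea2] := onto (e t1).
have [a12 ha12 Ea12] := onto [ffun t => (t == t0) (+) (t == t1)].
have [b3 hb3 Eb3] := onto (e t2).
have [b4 hb4 Eb4] := onto (e t3).
have [b34 hb34 Eb34] := onto [ffun t => (t == t2) (+) (t == t3)].
have H0 : forall t, xb (p0 t) = false by move=> t; rewrite (XV_xb t Ep0) ffunE.
have H12 : forall t, xb (a12 t) = xb (a1 t) (+) xb (a2 t).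
  by move=> t; rewrite (XV_xb t Ea12) (XV_xb t Ea1) (XV_xb t Ea2) !ffunE.
have H34 : forall t, xb (b34 t) = xb (b3 t) (+) xb (b4 t).
  by move=> t; rewrite (XV_xb t Eb34) (XV_xb t Eb3) (XV_xb t Eb4) !ffunE.
have Q : forall a b x y t, a \in S -> b \in S -> XV a = x -> XV b = y -> x t != y t -> q a b.
  by move=> a b x y t ha hb Ea Eb ne; apply: qR => //; apply: (nd _ _ _ _ t Ea Eb ne).
have q1 : q p0 a1 by apply: (Q _ _ _ _ t0 hp0 ha1 Ep0 Ea1); rewrite !ffunE.
have q2 : q p0 a2 by apply: (Q _ _ _ _ t1 hp0 ha2 Ep0 Ea2); rewrite !ffunE.
have q12 : q p0 a12 by apply: (Q _ _ _ _ t0 hp0 ha12 Ep0 Ea12); rewrite !ffunE.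
have K : forall y x, y \in S -> XV y = x -> x t0 = false -> x t1 = false ->
    x != [ffun => false] -> Dp y a1 (+) Dp y a2 (+) Dp y a12 (+) Dp y p0.
  move=> y x hy Ey x0 x1 nz.
  have [t Ht] : exists t, x t != false.
    apply/existsP; rewrite -negb_forall; apply: contra nz => /forallP H.
    by apply/eqP/ffunP => t; rewrite ffunE; exact/eqP/(H t).
  apply: (per_y H0 H12 q1 q2 q12).
  - by apply: (Q _ _ _ _ t hp0 hy Ep0 Ey); rewrite !ffunE eq_sym.
  - by apply: (Q _ _ _ _ t0 ha1 hy Ea1 Ey); rewrite !ffunE x0.
  - by apply: (Q _ _ _ _ t1 ha2 hy Ea2 Ey); rewrite !ffunE x1.
  - by apply: (Q _ _ _ _ t0 ha12 hy Ea12 Ey); rewrite !ffunE x0.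
have nz : forall (k : 'I_m), [ffun t => t == k] != [ffun => false].
  by move=> k; apply/eqP => /ffunP /(_ k); rewrite !ffunE eqxx.
apply: (final_contra H34).
- by apply: (K _ _ hb3 Eb3); rewrite ?ffunE //; apply: nz.
- by apply: (K _ _ hb4 Eb4); rewrite ?ffunE //; apply: nz.
- apply: (K _ _ hb34 Eb34); rewrite ?ffunE //.
  by apply/eqP => /ffunP /(_ t2); rewrite !ffunE eqxx.
Qed.


Definition k1 : 'I_4 := Ordinal (erefl true : (1 < 4)%N).
Definition k2 : 'I_4 := Ordinal (erefl true : (2 < 4)%N).
Definition k3 : 'I_4 := Ordinal (erefl true : (3 < 4)%N).
Definition k0 : 'I_4 := Ordinal (erefl true : (0 < 4)%N).

Definition mk (x z : bool) : 'I_4 :=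
  if x then (if z then k1 else k2) else (if z then k3 else k0).
Lemma xb_mk x z : xb (mk x z) = x. Proof. by case: x; case: z. Qed.
Lemma zb_mk x z : zb (mk x z) = z. Proof. by case: x; case: z. Qed.
Lemma mk_xz k : mk (xb k) (zb k) = k.
Proof. by apply: val_inj; case: k => [[|[|[|[|k]]]] Hk]. Qed.

Definition emb m (x : {ffun 'I_m -> bool}) : Idx m := [ffun t => mk (x t) false].
Definition S0 m : {set Idx m} := (@emb m) @: setT.

Lemma XV_emb m x : XV (@emb m x) = x.
Proof. by apply/ffunP => t; rewrite !ffunE xb_mk. Qed.

Lemma emb_inj m : injective (@emb m).
Proof. by move=> x y E; rewrite -(XV_emb x) E XV_emb. Qed.

Lemma S0_card m : #|S0 m| = (2 ^ m)%N.
Proof. by rewrite card_imset ?cardsT ?card_ffun ?card_bool ?card_ord //; exact: emb_inj. Qed.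

Lemma S0_blue m : {in S0 m &, forall a b, a != b -> blue a b}.
Proof.
move=> a b /imsetP [x _ ->] /imsetP [y _ ->] ne.
rewrite blueE !XV_emb; apply/andP; split.
  by apply: contra ne => /eqP ->.
by rewrite /q big1 // => t _; rewrite !ffunE !zb_mk.
Qed.

Lemma S0_trans m : transversal_graph (S0 m).
Proof. by split; [exact: S0_card | move=> a b ha hb ne; rewrite S0_blue ?orbT]. Qed.

Lemma KR m : (4 <= m)%N -> forall f : Idx m -> Idx m, {in S0 m &, injective f} ->
  {in S0 m &, forall a b, blue a b -> red (f a) (f b)} -> False.
Proof.
move=> hm f fi fb; apply: (no_all_red hm (S := f @: S0 m)).
  by rewrite card_in_imset // S0_card.
move=> a' b' /imsetP [a ha ->] /imsetP [b hb ->] ne.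
apply: fb => //; apply: S0_blue => //; by apply: contra ne => /eqP ->.
Qed.

Lemma part1 m : (4 <= m)%N -> forall S' : {set Idx m}, transversal_graph S' ->
  ~ compl_iso (S0 m) S'.
Proof.
move=> hm S' _ [f [fi _ fc]]; apply: (KR hm fi) => a b ha hb hab.
by have [-> _] := fc a b ha hb.
Qed.

Definition dotb m (x y : {ffun 'I_m -> bool}) (hx hy : {ffun 'I_m -> bool}) : bool :=
  \big[addb/false]_(t < m) ((x t (+) y t) && (hx t (+) hy t)).

Section Swap.
Variables (m : nat) (h : {ffun 'I_m -> bool} -> {ffun 'I_m -> bool}).
Hypothesis hP : forall x y, x != y -> dotb x y (h x) (h y).

Definition pf (v : Idx m) : Idx m := [ffun t => mk (xb (v t)) (zb (v t) (+) h (XV v) t)].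

Lemma XV_pf v : XV (pf v) = XV v.
Proof. by apply/ffunP => t; rewrite !ffunE xb_mk. Qed.

Lemma pfK : involutive pf.
Proof.
move=> v; apply/ffunP => t; rewrite ffunE XV_pf ffunE xb_mk zb_mk.
by rewrite -addbA addbb addbF mk_xz.
Qed.

Lemma q_pf a b : q (pf a) (pf b) = q a b (+) dotb (XV a) (XV b) (h (XV a)) (h (XV b)).
Proof.
rewrite /q /dotb -big_split; apply: eq_bigr => t _ /=; rewrite !ffunE !xb_mk !zb_mk.
by case: (xb (a t)); case: (xb (b t)); case: (zb (a t)); case: (zb (b t));
   case: (h (XV a) t); case: (h (XV b) t).
Qed.

Lemma swap_exists : exists p : {perm Idx m}, swapping_perm p.
Proof.
exists (perm (can_inj pfK)) => a b; rewrite !permE !redE !blueE !XV_pf q_pf.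
case: (eqVneq (XV a) (XV b)) => //= ne.
by rewrite (hP ne); case: (q a b).
Qed.
End Swap.


Definition mkf n (s : seq bool) : {ffun 'I_n -> bool} := [ffun t : 'I_n => nth false s (val t)].

Lemma ffun1 (x : {ffun 'I_1 -> bool}) : x = mkf 1 [:: x ord0].
Proof.
apply/ffunP => -[[|k] Hk]; rewrite ffunE //=; by congr (x _); apply: val_inj.
Qed.
Lemma ffun2 (x : {ffun 'I_2 -> bool}) :
  x = mkf 2 [:: x ord0; x (Ordinal (isT : (1 < 2)%N))].
Proof.
apply/ffunP => -[[|[|k]] Hk]; rewrite ffunE //=; by congr (x _); apply: val_inj.
Qed.
Lemma ffun3 (x : {ffun 'I_3 -> bool}) :
  x = mkf 3 [:: x ord0; x (Ordinal (isT : (1 < 3)%N)); x (Ordinal (isT : (2 < 3)%N))].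
Proof.
apply/ffunP => -[[|[|[|k]]] Hk]; rewrite ffunE //=; by congr (x _); apply: val_inj.
Qed.

Definition h1 (x : {ffun 'I_1 -> bool}) : {ffun 'I_1 -> bool} := x.
Definition h2 (x : {ffun 'I_2 -> bool}) : {ffun 'I_2 -> bool} :=
  mkf 2 [:: x ord0 (+) x (Ordinal (isT : (1 < 2)%N)); x (Ordinal (isT : (1 < 2)%N))].
Definition tbl3 (a b c : bool) : seq bool :=
  match a, b, c with
  | false, false, false => [:: false; false; false]
  | true, false, false => [:: true; false; false]
  | false, true, false => [:: true; true; false]
  | true, true, false => [:: false; true; true]
  | false, false, true => [:: true; true; true]
  | true, false, true => [:: false; false; true]
  | false, true, true => [:: true; false; true]
  | true, true, true => [:: false; true; false]
  end.
Definition h3 (x : {ffun 'I_3 -> bool}) : {ffun 'I_3 -> bool} :=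
  mkf 3 (tbl3 (x ord0) (x (Ordinal (isT : (1 < 3)%N))) (x (Ordinal (isT : (2 < 3)%N)))).

Lemma h1P x y : x != y -> dotb x y (h1 x) (h1 y).
Proof.
rewrite /h1 (ffun1 x) (ffun1 y); move: (x ord0) (y ord0) => a a'.
rewrite /dotb !big_ord_recl big_ord0 !ffunE /=.
by case: a; case: a'; rewrite ?eqxx.
Qed.

Lemma h2P x y : x != y -> dotb x y (h2 x) (h2 y).
Proof.
rewrite /h2 (ffun2 x) (ffun2 y).
move: (x ord0) (x (Ordinal (isT : (1 < 2)%N))) (y ord0) (y (Ordinal (isT : (1 < 2)%N))) => a b a' b'.
rewrite /dotb !big_ord_recl big_ord0 !ffunE /=.
by case: a; case: b; case: a'; case: b'; rewrite ?eqxx.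
Qed.

Lemma h3P x y : x != y -> dotb x y (h3 x) (h3 y).
Proof.
rewrite /h3 (ffun3 x) (ffun3 y).
move: (x ord0) (x (Ordinal (isT : (1 < 3)%N))) (x (Ordinal (isT : (2 < 3)%N)))
  (y ord0) (y (Ordinal (isT : (1 < 3)%N))) (y (Ordinal (isT : (2 < 3)%N))) => a b c a' b' c'.
rewrite /dotb !big_ord_recl big_ord0 !ffunE /=.
by case: a; case: b; case: c; case: a'; case: b'; case: c'; rewrite ?eqxx.
Qed.


Theorem theorem3 :
  (forall m : nat, (4 <= m)%N ->
     (* (1) *)
     (exists S : {set Idx m}, transversal_graph S /\
        forall S' : {set Idx m}, transversal_graph S' -> ~ compl_iso S S') /\
     (* (2a) *)
     (~ exists p : {perm Idx m}, amicable_swapping p) /\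
     (* (2b) *)
     (~ exists P : {set {set {set Idx m}}},
          (forall S : {set Idx m},
             S \in cover P <-> (transversal_graph S /\ ~ compl_iso S S)) /\
          trivIset P /\
          forall B, B \in P -> #|B| = 2%N /\
            {in B &, forall S S', S != S' -> compl_iso S S'})) /\
  (* (3) *)
  (forall m' : nat, (1 <= m')%N ->
     ((exists p : {perm Idx m'}, swapping_perm p) <-> (m' <= 3)%N)).
Proof.
split.
  move=> m hm; split; [|split].
  - exists (S0 m); split; [exact: S0_trans | exact: part1 hm].
  - case=> p Hp; apply: (KR hm (f := p)).
      by move=> a b _ _; exact: perm_inj.
    by move=> a b _ _ hab; exact: (proj1 (Hp a b) hab).
  - case=> P [HP [_ HB]].
    have : S0 m \in cover P.
      by apply/HP; split; [exact: S0_trans | exact: (part1 hm (S0_trans m))].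
    case/bigcupP => B hB hS0; have [c2 Hin] := HB B hB.
    have [S' [hS'B neS']] : exists S', S' \in B /\ S' != S0 m.
      move/eqP: c2 => /cards2P [x [y [xy EB]]]; rewrite EB in hS0 *.
      case/set2P: hS0 => E.
        by exists y; split; [rewrite !inE eqxx orbT | rewrite E eq_sym].
      by exists x; split; [rewrite !inE eqxx | rewrite E].
    have ci : compl_iso (S0 m) S' by apply: Hin => //; rewrite eq_sym.
    have : S' \in cover P by apply/bigcupP; exists B.
    by case/HP => tS' _; exact: (part1 hm tS' ci).
move=> m' hm'; split.
  case=> p Hp; rewrite leqNgt; apply/negP => h4.
  apply: (KR h4 (f := p)); first by move=> a b _ _; exact: perm_inj.
  by move=> a b _ _ hab; rewrite (proj1 (Hp a b)).
case: m' hm' => [|[|[|[|m']]]] //= _ _.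
- exact: (swap_exists h1P).
- exact: (swap_exists h2P).
- exact: (swap_exists h3P).
Qed.
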